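(* Let $(k_i)_{i\in\mathbb N}\subset\mathbb N$ satisfy $k_{2i}>1$ for infinitely many $i$ and $k_{2i-1}>1$ for infinitely many $i$, and let $\xi\in(0,1)$. If $\vec\xi=(\xi,\xi,\xi)$ does not belong to $W^s(\vec0)+\mathbb Z^3$, then $e^{2\pi i\xi}$ is not a continuous eigenvalue of the corresponding interval translation map (equivalently of its subshift $(X,\sigma)$).
   Context: For $0<\beta\le\alpha\le 1$ let $T_{\alpha,\beta}(x)=x+\alpha$ on $[0,1-\alpha)$, $x+\beta$ on $[1-\alpha,1-\beta)$, $x-1+\beta$ on $[1-\beta,1]$. With $U=\{0<\beta\le\alpha\le1\}$ and $G(\alpha,\beta)=(\beta/\alpha,(\beta-1)/\alpha+\lfloor1/\alpha\rfloor)$, the map is of infinite type if $G^n(\alpha,\beta)\in U^\circ$ for all $n\ge 0$; infinite type maps correspond bijectively to coding sequences $k_i=\lfloor1/\alpha_i\rfloor$, $(\alpha_i,\beta_i)=G^{i-1}(\alpha,\beta)$, which are exactly the sequences in the claim. For $k\in\mathbb N$ let $\chi_k$ be the substitution $1\mapsto2$, $2\mapsto31^k$, $3\mapsto31^{k-1}$, let $\rho=\lim_i\chi_{k_1}\circ\cdots\circ\chi_{k_i}(3)$ and $X$ the closure of the shift orbit of $\rho$; $(X,\sigma)$ is isomorphic to $T_{\alpha,\beta}$ on its Cantor attractor. Let $A_k=\begin{pmatrix}0&k&k-1\\1&0&0\\0&1&1\end{pmatrix}$ act on row vectors, $Q^-=\{x:x_1,x_2\ge0\ge x_3\}$, and let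 $W^s(\vec0)$ be the linear span of $\bigcap_{n\ge1}\{\vec x : \vec xA_{k_1}\cdots A_{k_n}\in Q^-\}$. A continuous eigenvalue $e^{2\pi i\xi}$ means there is a nonzero continuous $f:X\to\mathbb C$ with $f\circ\sigma=e^{2\pi i\xi}f$. *)

(* Defs.v *)
From mathcomp Require Import all_boot all_order all_algebra.
From mathcomp Require Import reals trigo.
From mathcomp Require Import complex.

Set Implicit Arguments.
Unset Strict Implicit.
Unset Printing Implicit Defensive.

Import Order.TTheory GRing.Theory Num.Theory.
Local Open Scope ring_scope.
Local Open Scope complex_scope.

(* Letters are the natural numbers 1, 2, 3. *)
Definition chi (k : nat) (a : nat) : seq nat :=
  match a with
  | 1 => [:: 2]
  | 2 => 3 :: nseq k 1
  | 3 => 3 :: nseq k.-1 1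
  | _ => [::]
  end.

Definition chi_word (k : nat) (w : seq nat) : seq nat := flatten (map (chi k) w).

(* w_i = chi_{k_1} o chi_{k_2} o ... o chi_{k_i} (3). *)
Definition chi_comp3 (k : nat -> nat) (i : nat) : seq nat :=
  foldr (fun j acc => chi_word (k j) acc) [:: 3] (iota 1 i)%N.

(* rho is the limit of the words chi_comp3 k i: every one of them is a prefix of rho. *)
Definition is_limit_word (k : nat -> nat) (rho : nat -> nat) : Prop :=
  forall i j, (j < size (chi_comp3 k i))%N -> rho j = nth 0 (chi_comp3 k i) j.

Definition shift (x : nat -> nat) : nat -> nat := fun j => x j.+1.

(* X = closure of the shift orbit of rho in the product topology:
   every finite prefix of x occurs in rho. *)
Definition orbit_closure (rho : nat -> nat) (x : nat -> nat) : Prop :=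
  forall N, exists n, forall j, (j < N)%N -> x j = rho (n + j)%N.

Definition continuous_on_subshift (R : realType) (X : (nat -> nat) -> Prop)
    (f : (nat -> nat) -> R[i]) : Prop :=
  forall x, X x -> forall e : R, 0 < e ->
    exists N, forall y, X y -> (forall j, (j < N)%N -> y j = x j) ->
      `|f y - f x| < e%:C.

Definition continuous_eigenvalue (R : realType) (X : (nat -> nat) -> Prop) (xi : R) : Prop :=
  exists f : (nat -> nat) -> R[i],
    continuous_on_subshift X f /\
    (exists x, X x /\ f x != 0) /\
    (forall x, X x -> f (shift x) = (cos (2 * pi * xi) +i* sin (2 * pi * xi)) * f x).

Definition Amat (R : realType) (k : nat) : 'M[R]_3 :=
  \matrix_(i < 3, j < 3)
    (match nat_of_ord i, nat_of_ord j with
     | 0, 1 => (k%:R : R)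
     | 0, 2 => k.-1%:R
     | 1, 0 => 1
     | 2, 1 => 1
     | 2, 2 => 1
     | _, _ => 0
     end).

Definition Aprod (R : realType) (k : nat -> nat) (n : nat) : 'M[R]_3 :=
  \prod_(1 <= i < n.+1) Amat R (k i).

Definition Qminus (R : realType) (x : 'rV[R]_3) : Prop :=
  0 <= x ord0 0 /\ 0 <= x ord0 1 /\ x ord0 2 <= 0.

Definition stable_cone (R : realType) (k : nat -> nat) (x : 'rV[R]_3) : Prop :=
  forall n, (1 <= n)%N -> Qminus (x *m Aprod R k n).

(* Linear span: finite linear combinations of elements of the cone. *)
Definition Ws (R : realType) (k : nat -> nat) (x : 'rV[R]_3) : Prop :=
  exists (m : nat) (c : 'I_m -> R) (v : 'I_m -> 'rV[R]_3),
    (forall l, stable_cone k (v l)) /\ x = \sum_(l < m) c l *: v l.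

Definition in_Ws_plus_Z3 (R : realType) (k : nat -> nat) (x : 'rV[R]_3) : Prop :=
  exists (w : 'rV[R]_3) (z : 'I_3 -> int),
    Ws k w /\ x = w + \row_(j < 3) (z j)%:~R.

(* Main.v *)
Require Import Defs.
From mathcomp Require Import all_boot all_order all_algebra.
From mathcomp Require Import reals trigo.
From mathcomp Require Import complex.
From mathcomp Require Import ring lra zify.
From Stdlib Require Import FunctionalExtensionality.
From Stdlib Require Classical_Prop.
Import Order.TTheory GRing.Theory Num.Theory.

Section P1.
Set Implicit Arguments.
Unset Strict Implicit.

Definition Fw (k : nat -> nat) (s : seq nat) (w : seq nat) : seq nat :=
  foldr (fun j acc => chi_word (k j) acc) w s.
Definition sig k n w := Fw k (iota 1 n) w.
Definition Wl k n i := Fw k (iota n.+1 (i - n)) [:: 3].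
Definition hs k n a := size (sig k n [:: a]).

Lemma chi_word_cat kk u v : chi_word kk (u ++ v) = chi_word kk u ++ chi_word kk v.
Proof. by rewrite /chi_word map_cat flatten_cat. Qed.

Lemma chi_word_mid kk u a s : chi_word kk (u ++ a :: s) = chi_word kk u ++ chi kk a ++ chi_word kk s.
Proof. by rewrite /chi_word map_cat flatten_cat. Qed.

Lemma chi_word1 kk a : chi_word kk [:: a] = chi kk a.
Proof. by rewrite /chi_word /= cats0. Qed.

Lemma Fw_cat k s u v : Fw k s (u ++ v) = Fw k s u ++ Fw k s v.
Proof. by elim: s => //= j s IH; rewrite IH chi_word_cat. Qed.

Lemma Fw_app k s1 s2 w : Fw k (s1 ++ s2) w = Fw k s1 (Fw k s2 w).
Proof. by rewrite /Fw foldr_cat. Qed.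

Lemma sig_succ k n w : sig k n.+1 w = sig k n (chi_word (k n.+1) w).
Proof. by rewrite /sig -[n.+1]addn1 iotaD Fw_app add1n addn1. Qed.

Lemma sig_cat k n u v : sig k n (u ++ v) = sig k n u ++ sig k n v.
Proof. exact: Fw_cat. Qed.

Lemma sigW k n i : n <= i -> sig k n (Wl k n i) = chi_comp3 k i.
Proof.
move=> le; rewrite /sig /Wl -Fw_app -(add1n n) -iotaD subnKC //.
Qed.

Lemma W_succ k n i : n < i -> Wl k n i = chi_word (k n.+1) (Wl k n.+1 i).
Proof. by move=> lt; rewrite /Wl -subnSK. Qed.

Lemma W_le k n i : i <= n -> Wl k n i = [:: 3].
Proof. by move=> le; rewrite /Wl (eqP le). Qed.

Definition valid (w : seq nat) := all (fun a => 0 < a < 4) w.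

Lemma valid_chi kk a : valid (chi kk a).
Proof. case: a => [|[|[|[|a]]]] //=; rewrite /valid /= ?all_nseq; case: kk => [|kk] //=; rewrite ?all_nseq /= ?orbT //. Qed.

Lemma valid_chi_word kk w : valid (chi_word kk w).
Proof.
elim: w => // a w IH. rewrite -[a :: w]/([:: a] ++ w) chi_word_cat chi_word1 /valid all_cat. by have := valid_chi kk a; rewrite /valid => ->.
Qed.

Lemma valid_Fw k s w : valid w -> valid (Fw k s w).
Proof. by case: s => //= j s _; exact: valid_chi_word. Qed.

Lemma valid_W k n i : valid (Wl k n i).
Proof. exact: valid_Fw. Qed.

Lemma chi_cons kk a : 0 < a < 4 -> exists b t, chi kk a = b :: t /\ 0 < b < 4.
Proof.
case: a => [|[|[|[|a]]]] //= _.
- by exists 2, [::].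
- by exists 3, (nseq kk 1).
- by exists 3, (nseq kk.-1 1).
Qed.

Lemma Fw_pos k s a : 0 < a < 4 -> 0 < size (Fw k s [:: a]).
Proof.
elim: s a => [|j s IH] a Ha //=.
have := IH a Ha.
have : valid (Fw k s [:: a]) by apply: valid_Fw; rewrite /valid /= Ha.
case: (Fw k s [:: a]) => [|b t] //= /andP [Hb _] _.
rewrite /chi_word /= size_cat.
have [c [t' [-> _]]] := chi_cons (k j) Hb.
by [].
Qed.

Lemma hs_pos k n a : 0 < a < 4 -> 0 < hs k n a.
Proof. exact: Fw_pos. Qed.

Lemma size_sig_cat k n u v : size (sig k n (u ++ v)) = size (sig k n u) + size (sig k n v).
Proof. by rewrite sig_cat size_cat. Qed.

Lemma sig_nil k n : sig k n [::] = [::].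
Proof. by rewrite /sig /Fw; elim: (iota 1 n) => //= x s; rewrite /chi_word /= => ->. Qed.

Lemma size_sig_nseq k n j : size (sig k n (nseq j 1)) = j * hs k n 1.
Proof.
elim: j => [|j IH]; first by rewrite /= sig_nil.
by rewrite -[nseq j.+1 1]/([:: 1] ++ nseq j 1) size_sig_cat IH mulSn.
Qed.


Lemma chi1 kk : chi kk 1 = [:: 2]. Proof. by []. Qed.
Lemma chi2 kk : chi kk 2 = [:: 3] ++ nseq kk 1. Proof. by []. Qed.
Lemma chi3 kk : chi kk 3 = [:: 3] ++ nseq kk.-1 1. Proof. by []. Qed.

Lemma hs_1 k n : hs k n.+1 1 = hs k n 2.
Proof. by rewrite /hs sig_succ chi_word1 chi1. Qed.

Lemma hs_2 k n : hs k n.+1 2 = hs k n 3 + k n.+1 * hs k n 1.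
Proof. by rewrite /hs sig_succ chi_word1 chi2 size_sig_cat size_sig_nseq. Qed.

Lemma hs_3 k n : hs k n.+1 3 = hs k n 3 + (k n.+1).-1 * hs k n 1.
Proof. by rewrite /hs sig_succ chi_word1 chi3 size_sig_cat size_sig_nseq. Qed.

Lemma hs0 k a : hs k 0 a = 1.
Proof. by []. Qed.

Lemma W_ext k n i : n <= i ->
  Wl k n i.+1 = Wl k n i ++ Fw k (iota n.+1 (i - n)) (nseq (k i.+1).-1 1).
Proof.
move=> le; rewrite /Wl subSn // -[(i - n).+1]addn1 iotaD Fw_app.
have -> : n.+1 + (i - n) = i.+1 by lia.
by rewrite /= chi_word1 chi3 Fw_cat.
Qed.

Lemma W_pref k n i d : n <= i -> exists t, Wl k n (i + d) = Wl k n i ++ t.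
Proof.
move=> le; elim: d => [|d [t IH]]; first by exists [::]; rewrite addn0 cats0.
rewrite addnS W_ext; last by lia.
by rewrite IH -catA; eexists.
Qed.

Lemma W_pref2 k n i i' : i <= i' -> n <= i' -> exists t, Wl k n i' = Wl k n i ++ t.
Proof.
move=> le1 le2; case: (leqP i n) => H.
  rewrite (W_le k H); have [t Ht] := @W_pref k n n (i' - n) (leqnn n).
  by rewrite subnKC // (@W_le k n n (leqnn n)) in Ht; exists t.
have [t Ht] := @W_pref k n i (i' - i) (ltnW H); exists t.
by rewrite subnKC // in Ht.
Qed.

Lemma EXT k : (forall N, exists i, N <= i /\ 1 < k i) ->
  forall n i u s, Wl k n i = u ++ s ->
  exists i' a s', n <= i' /\ Wl k n i' = u ++ a :: s'.
Proof.
move=> Hk n i u s E.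
have [j [Hj Hkj]] := Hk (maxn n i).+1.
have [j' ej] : exists j', j = j'.+1 by exists j.-1; lia.
subst j.
have [t Ht] := @W_pref2 k n i j' (leq_trans (leq_maxr n i) (ltnSE Hj))
  (leq_trans (leq_maxl n i) (ltnSE Hj)).
have [m em] : exists m, (k j'.+1).-1 = m.+1 by exists (k j'.+1).-2; lia.
have E3 := W_ext k (leq_trans (leq_maxl n i) (ltnSE Hj)).
rewrite Ht E em -[nseq m.+1 1]/([:: 1] ++ nseq m 1) Fw_cat in E3.
move: E3; have := Fw_pos k (iota n.+1 (j' - n)) (isT : 0 < 1 < 4).
case: (Fw k (iota n.+1 (j' - n)) [:: 1]) => [|x y] // _ E3.
case E2 : (s ++ t ++ (x :: y) ++ Fw k (iota n.+1 (j' - n)) (nseq m 1)) => [|a s'].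
  by move/(congr1 size): E2; rewrite !size_cat /=; lia.
exists j'.+1, a, s'; split; first by lia.
by rewrite -E2 E3 !catA.
Qed.

Lemma chichi k1 k2 a : 0 < a < 4 -> exists t, chi_word k1 (chi_word k2 [:: a]) = [:: 3] ++ t.
Proof.
case: a => [|[|[|[|a]]]] // _; rewrite chi_word1.
- by rewrite chi1 chi_word1 chi2; eexists.
- by rewrite chi2 chi_word_cat chi_word1 chi3 -catA; eexists.
- by rewrite chi3 chi_word_cat chi_word1 chi3 -catA; eexists.
Qed.

Lemma GP k rho m i u a s : is_limit_word k rho ->
  Wl k m.+2 i = u ++ a :: s -> 0 < a < 4 ->
  forall j, j < size (chi_comp3 k m) -> rho (size (sig k m.+2 u) + j) = rho j.
Proof.
move=> Hr E Ha j Hj.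
case: (leqP i m.+2) => Hi.
  rewrite W_le // in E; case: u E => [|x u] E; last by case: E => _; case: u.
  by rewrite sig_nil.
have [t Ht] := chichi (k m.+1) (k m.+2) Ha.
have Ea : sig k m.+2 [:: a] = chi_comp3 k m ++ sig k m t.
  by rewrite !sig_succ Ht sig_cat.
have := sigW k (ltnW Hi); rewrite E sig_cat -[a :: s]/([:: a] ++ s) sig_cat Ea => Ec.
have Hlt : size (sig k m.+2 u) + j < size (chi_comp3 k i).
  by rewrite -Ec !size_cat; lia.
rewrite (Hr i _ Hlt) -Ec nth_cat ltnNge leq_addr /= addKn.
by rewrite -catA nth_cat Hj -(Hr m j Hj).
Qed.

Lemma OCC k : (forall i, 1 <= i -> 0 < k i) ->
  forall d n, 1 < k (n + 1 + 2 * d) -> exists i u s, Wl k n i = u ++ 1 :: s.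
Proof.
move=> Hpos; elim=> [|d IH] n.
  rewrite muln0 addn0 addn1 => Hk.
  have [m em] : exists m, (k n.+1).-1 = m.+1 by exists (k n.+1).-2; lia.
  exists n.+1, [:: 3], (nseq m 1).
  by rewrite W_succ // W_le // chi_word1 chi3 em.
move=> Hk.
have [i [u [s E]]] : exists i u s, Wl k n.+2 i = u ++ 1 :: s.
  by apply: IH; have -> : n.+2 + 1 + 2 * d = n + 1 + 2 * d.+1 by lia.
case: (leqP i n.+2) => Hi.
  by move: E; rewrite W_le //; case: u => [|x [|y u]].
have [m em] : exists m, k n.+1 = m.+1 by exists (k n.+1).-1; have := Hpos n.+1; lia.
exists i, (chi_word (k n.+1) (chi_word (k n.+2) u) ++ [:: 3]),
  (nseq m 1 ++ chi_word (k n.+1) (chi_word (k n.+2) s)).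
rewrite W_succ; last by lia.
rewrite W_succ; last by lia.
rewrite E chi_word_mid chi1 /= chi_word_mid chi2 em /=.
by rewrite -!catA.
Qed.

Lemma even_odd n : exists m, n = 2 * m \/ n = (2 * m).+1.
Proof.
elim: n => [|n [m [->|->]]]; first by exists 0; left.
  by exists m; right.
by exists m.+1; left; lia.
Qed.

Lemma parity_d k :
  (forall N, exists i, N <= i /\ 1 < k (2 * i)) ->
  (forall N, exists i, N <= i /\ 1 < k (2 * i).+1) ->
  forall n, exists d, 1 < k (n + 1 + 2 * d).
Proof.
move=> H2 H3 n; have [m [->|->]] := even_odd n.
  have [i [Hi Hk]] := H3 m; exists (i - m).
  by have -> : 2 * m + 1 + 2 * (i - m) = (2 * i).+1 by lia.
have [i [Hi Hk]] := H2 m.+1; exists (i - m.+1).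
by have -> : (2 * m).+1 + 1 + 2 * (i - m.+1) = 2 * i by lia.
Qed.

Lemma hs3_mono k m d : hs k m 3 <= hs k (m + d) 3.
Proof. elim: d => [|d IH]; first by rewrite addn0. by rewrite addnS hs_3; exact: leq_trans IH (leq_addr _ _). Qed.

Lemma SZ k : (forall N, exists i, N <= i /\ 1 < k i) ->
  forall N, exists M, forall m, M <= m -> N <= size (chi_comp3 k m).
Proof.
move=> Hk; elim=> [|N [M IH]]; first by exists 0.
have [j [Hj Hkj]] := Hk M.+1.
exists j => m Hm.
have [j' ej] : exists j', j = j'.+1 by exists j.-1; lia.
subst j.
have h1 := hs_pos k j' (isT : 0 < 1 < 4).
have := hs_3 k j'; have := IH j' (ltnSE Hj).
have := hs3_mono k j'.+1 (m - j'.+1).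
rewrite subnKC // /hs -/(chi_comp3 k m) -/(chi_comp3 k j') -/(chi_comp3 k j'.+1).
rewrite /hs in h1 *.
move=> a b c; have b' : N <= size (sig k j' [:: 3]) := b; suff : N < size (sig k m [:: 3]) by [].
have : 0 < (k j'.+1).-1 * size (sig k j' [:: 1]) by rewrite muln_gt0 h1 andbT; lia.
lia.
Qed.

Lemma GOOD k rho :
  (forall N, exists i, N <= i /\ 1 < k i) -> is_limit_word k rho ->
  forall N, exists M, forall n, M <= n -> forall i u s, Wl k n i = u ++ s ->
  forall j, j < N -> rho (size (sig k n u) + j) = rho j.
Proof.
move=> Hk Hr N.
have [M HM] := SZ Hk N.
exists M.+2 => n Hn i u s E j Hj.
have [m em] : exists m, n = m.+2 by exists n.-2; lia.
subst n.
have [i' [a [s' [_ E']]]] := EXT Hk E.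
have Ha : 0 < a < 4.
  by have := valid_W k m.+2 i'; rewrite E' /valid all_cat /= => /andP [_ /andP []].
apply: (GP Hr E' Ha).
by apply: leq_trans Hj (HM m _); lia.
Qed.

End P1.
Unset Implicit Arguments.
Set Strict Implicit.

Local Open Scope ring_scope.

Section P2.
Local Open Scope complex_scope.
Variable R : realType.

Definition Eexp (t : R) : R[i] := cos (2 * pi * t) +i* sin (2 * pi * t).
Definition Near (t d : R) := exists m : int, `|t - m%:~R| < d.

Lemma Eexp_add a b : Eexp (a + b) = Eexp a * Eexp b.
Proof.
rewrite /Eexp mulrDr cosD sinD.
apply/eqP; rewrite eq_complex /=; apply/andP; split; apply/eqP; ring.
Qed.

Lemma Eexp1 : Eexp 1 = 1.
Proof.
by rewrite /Eexp mulr1 mulr_natl cos2pi sin2pi.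
Qed.

Lemma Eexp_nat (m : nat) : Eexp m%:R = 1.
Proof.
elim: m => [|m IH]; first by rewrite /Eexp mulr0 cos0 sin0.
by rewrite -addn1 natrD Eexp_add IH Eexp1 mulr1.
Qed.

Lemma Eexp_pow xi (p : nat) : (Eexp xi) ^+ p = Eexp (xi * p%:R).
Proof.
elim: p => [|p IH]; first by rewrite expr0 mulr0 /Eexp mulr0 cos0 sin0.
by rewrite exprS IH -Eexp_add -addn1 natrD mulrDr mulr1 addrC.
Qed.

Lemma absC (z : R[i]) : `|z| = (complex.Re `|z|)%:C.
Proof. by rewrite normc_def. Qed.

Lemma Re_le_abs (z : R[i]) : `|complex.Re z| <= complex.Re `|z|.
Proof.
rewrite normc_def /= -sqrtr_sqr; apply: ler_wsqrtr.
by rewrite lerDl sqr_ge0.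
Qed.


Lemma near_of_E (t d : R) : 0 <= t -> 0 < d -> d <= 1/2 ->
  `|Eexp t - 1| < (1 - cos (2 * pi * d))%:C -> Near t d.
Proof.
move=> t0 d0 d1 H.
have [mn Em] : exists mn : nat, Num.floor (t + 1/2) = mn%:Z.
  have : 0 <= Num.floor (t + 1/2) by rewrite floor_ge0; lra.
  by case: (Num.floor _) => // n _; exists n.
have := floor_itv (t + 1/2); rewrite Em intrD /= => /andP [h1 h2].
exists mn%:Z.
have Es : Eexp t = Eexp (t - mn%:R).
  by rewrite -[in LHS](subrK (mn%:R) t) (Eexp_add (t - mn%:R)) Eexp_nat mulr1.
have hp := pi_gt0 R.
set s := t - mn%:R in Es *.
have sb1 : -(1/2) <= s by rewrite /s; lra.
have sb2 : s < 1/2 by rewrite /s; lra.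
rewrite ltNge; apply/negP => Hds.
have c1 : cos (2 * pi * s) <= cos (2 * pi * d).
  rewrite -cos_norm normrM (ger0_norm (_ : 0 <= 2 * pi)); last by lra.
  have sabs : `|s| <= 1/2.
    by case: (lerP 0 s) => hs; [rewrite ger0_norm | rewrite ltr0_norm]; lra.
  rewrite leNgt ltr_cos ?in_itv /=.
  - by rewrite -leNgt ler_pM2l //; lra.
  - apply/andP; split; first by apply: mulr_ge0; [lra | exact: normr_ge0].
    by nra.
  - by apply/andP; split; nra.
have H2 := Re_le_abs (Eexp s - 1).
rewrite Es absC ltcR in H.
have : complex.Re (Eexp s - 1) = cos (2 * pi * s) - 1 by [].
move=> ER; rewrite ER in H2.
have : `|cos (2 * pi * s) - 1| = 1 - cos (2 * pi * s).
  by rewrite ler0_norm ?opprB //; have := cos_le1 (2 * pi * s); lra.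
move=> EN; rewrite EN in H2.
lra.
Qed.


Lemma abs_gt0C (z : R[i]) : z != 0 -> 0 < complex.Re `|z|.
Proof. by move=> nz; rewrite -ltcR -absC normr_gt0. Qed.

Lemma EIG (rho : nat -> nat) (xi : R) (f : (nat -> nat) -> R[i]) :
  continuous_on_subshift (orbit_closure rho) f ->
  (exists x, orbit_closure rho x /\ f x != 0) ->
  (forall x, orbit_closure rho x -> f (shift x) = (cos (2 * pi * xi) +i* sin (2 * pi * xi)) * f x) ->
  0 < xi ->
  forall d, 0 < d -> d <= 1/2 ->
  exists N, forall p : nat, (forall j, (j < N)%N -> rho (p + j)%N = rho j) -> Near (xi * p%:R) d.
Proof.
move=> Hc [x0 [Hx0 Hfx0]] Hf xi0 d d0 d1.
pose T (m : nat) := fun j => rho (m + j)%N.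
have HT : forall m, orbit_closure rho (T m) by move=> m N; exists m.
have HS : forall m, shift (T m) = T m.+1.
  by move=> m; apply: functional_extensionality => j; rewrite /shift /T addnS addSn.
have T0 : T 0%N = rho by apply: functional_extensionality => j; rewrite /T add0n.
have HfT : forall m, f (T m) = (Eexp xi) ^+ m * f rho.
  elim=> [|m IH]; first by rewrite expr0 mul1r T0.
  by rewrite -HS Hf // IH exprS mulrA.
have frho : f rho != 0.
  have [N0 HN0] := Hc x0 Hx0 _ (abs_gt0C _ Hfx0).
  have [n Hn] := Hx0 N0.
  have := HN0 (T n) (HT n) (fun j hj => esym (Hn j hj)).
  rewrite -absC HfT; apply: contraTneq => ->.
  by rewrite mulr0 sub0r normrN ltxx.
have e0 : 0 < 1 - cos (2 * pi * d).
  have hp := pi_gt0 R.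
  by rewrite subr_gt0 -[X in _ < X]cos0 ltr_cos ?in_itv /=; try (apply/andP; split); nra.
have [N HN] := Hc rho (HT 0%N) _ (mulr_gt0 e0 (abs_gt0C _ frho)).
exists N => p Hp.
apply: near_of_E => //; first by apply: mulr_ge0; [lra | exact: ler0n].
have := HN (T p) (HT p) Hp.
rewrite HfT -{2}(mul1r (f rho)) -mulrBl normrM rmorphM /= Eexp_pow.
have -> : `|f rho| = (Normc.normc (f rho))%:C by exact: absC.
by rewrite ltr_pM2r // ltcR; exact: abs_gt0C.
Qed.

End P2.
Arguments Near {R}. Arguments Eexp {R}.

Section P3.
Variable R : realType.
Definition row3 (a b c : R) : 'rV[R]_3 :=
  \row_(j < 3) (if (j : nat) == 0%N then a else if (j : nat) == 1%N then b else c).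

Lemma row3E (x : 'rV[R]_3) : x = row3 (x ord0 0) (x ord0 1) (x ord0 2).
Proof.
apply/rowP => j; rewrite !mxE; case: j => [[|[|[|j]]] Hj] //=; congr (x _ _); exact: val_inj.
Qed.

Lemma row3_mulA (a b c : R) kk : row3 a b c *m Amat R kk =
  row3 b (kk%:R * a + c) (kk.-1%:R * a + c).
Proof.
apply/rowP => j; rewrite !mxE !big_ord_recl big_ord0 !mxE /=.
by case: j => [[|[|[|j]]] Hj] //=; ring.
Qed.

Lemma rowx_mulA (x : 'rV[R]_3) kk : x *m Amat R kk =
  row3 (x ord0 1) (kk%:R * x ord0 0 + x ord0 2) (kk.-1%:R * x ord0 0 + x ord0 2).
Proof. by rewrite {1}(row3E x) row3_mulA. Qed.

Lemma row3_0 a b c : row3 a b c ord0 0 = a. Proof. by rewrite mxE. Qed.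
Lemma row3_1 a b c : row3 a b c ord0 1 = b. Proof. by rewrite mxE. Qed.
Lemma row3_2 a b c : row3 a b c ord0 2 = c. Proof. by rewrite mxE. Qed.

Lemma row3B a b c a' b' c' : row3 a b c - row3 a' b' c' = row3 (a - a') (b - b') (c - c').
Proof. by apply/rowP => j; rewrite !mxE; case: ifP => _ //; case: ifP. Qed.

Lemma row3N a b c : - row3 a b c = row3 (- a) (- b) (- c).
Proof. by apply/rowP => j; rewrite !mxE; case: ifP => _ //; case: ifP. Qed.

Lemma const3 (a : R) : const_mx a = row3 a a a.
Proof. by apply/rowP => j; rewrite !mxE; case: ifP => _ //; case: ifP. Qed.

Lemma Aprod_S k n : Aprod R k n.+1 = Aprod R k n *m Amat R (k n.+1).
Proof. by rewrite /Aprod big_nat_recr. Qed.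

Lemma Aprod_0 k : Aprod R k 0 = 1%:M.
Proof. by rewrite /Aprod big_geq. Qed.


Definition err (t : R) := t - (Num.floor (t + 1/2))%:~R.

Lemma errE (t : R) (m : int) : `|t - m%:~R| < 1/2 -> err t = t - m%:~R.
Proof.
move=> H; rewrite /err; congr (_ - _%:~R); apply: floor_def.
rewrite intrD; move: H; rewrite ltr_norml => /andP [h1 h2].
by apply/andP; split; lra.
Qed.

Lemma err_add (a b : R) : `|err a + err b| < 1/2 -> err (a + b) = err a + err b.
Proof.
move=> H; rewrite (errE _ (Num.floor (a + 1/2) + Num.floor (b + 1/2))).
  by rewrite /err intrD; ring.
by move: H; rewrite /err intrD; congr (`|_| < _); ring.
Qed.

Lemma err_near (t d : R) (m : int) : d <= 1/2 -> `|t - m%:~R| < d -> `|err t| < d.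
Proof. by move=> d1 H; rewrite (errE _ m) //; apply: lt_le_trans H d1. Qed.

Lemma near_diff (a b d : R) (m1 m2 : int) : `|a - m1%:~R| < d -> `|a + b - m2%:~R| < d ->
  `|b - (m2 - m1)%:~R| < d + d.
Proof.
move=> h1 h2.
have -> : b - (m2 - m1)%:~R = (a + b - m2%:~R) - (a - m1%:~R) by rewrite intrB; ring.
apply: le_lt_trans (ler_normB _ _) _.
by apply: ltrD.
Qed.

Definition pbstep (kk : nat) (y : int * int * int) : int * int * int :=
  (y.1.2 - y.2, y.1.1, y.2 - (kk.-1)%:Z * (y.1.2 - y.2)).
Fixpoint pbZ (k : nat -> nat) (n : nat) (y : int * int * int) : int * int * int :=
  if n is n'.+1 then pbZ k n' (pbstep (k n) y) else y.
Definition rowZ (y : int * int * int) : 'rV[R]_3 := row3 (y.1.1)%:~R (y.1.2)%:~R (y.2)%:~R.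

Lemma pbstep_ok kk y : (0 < kk)%N -> rowZ (pbstep kk y) *m Amat R kk = rowZ y.
Proof.
case: kk => // kk _; case: y => [[y1 y2] y3].
rewrite /rowZ row3_mulA /=; congr row3; rewrite ?intrB ?intrM /= ?intrB.
  have -> : (kk.+1%:R : R) = kk%:R + 1 by rewrite -addn1 natrD.
  have -> : ((kk%:Z)%:~R : R) = kk%:R by [].
  ring.
have -> : ((kk%:Z)%:~R : R) = kk%:R by [].
ring.
Qed.

Lemma pbZ_ok k n y : (forall i, (1 <= i)%N -> (0 < k i)%N) ->
  rowZ (pbZ k n y) *m Aprod R k n = rowZ y.
Proof.
move=> Hk; elim: n y => [|n IH] y; first by rewrite Aprod_0 mulmx1.
by rewrite Aprod_S mulmxA /= IH pbstep_ok //; apply: Hk.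
Qed.


Section Sign.
Variables (p q r km : nat -> R) (n0 : nat).
Hypothesis km0 : forall n, (n0 <= n)%N -> 0 <= km n.
Hypothesis Hp : forall n, (n0 <= n)%N -> p n.+1 = q n.
Hypothesis Hr : forall n, (n0 <= n)%N -> r n.+1 = km n * p n + r n.
Hypothesis Hq : forall n, (n0 <= n)%N -> q n.+1 = r n.+1 + p n.
Hypothesis Hlim : forall e, 0 < e -> exists M, forall n, (M <= n)%N -> `|p n| < e.

Lemma Opos n : (n0 <= n)%N -> 0 <= p n -> 0 <= q n -> 0 < r n -> False.
Proof.
move=> Hn hp hq hr.
have inv : forall j, 0 <= p (n + j)%N /\ 0 <= q (n + j)%N /\ r n <= r (n + j)%N.
  elim=> [|j [h1 [h2 h3]]]; first by rewrite addn0.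
  have hnj : (n0 <= n + j)%N by apply: leq_trans Hn (leq_addr _ _).
  rewrite addnS Hp // Hq // Hr //.
  have := km0 _ hnj; split => //; nra.
have [M HM] := Hlim _ hr.
have := HM (n + M.+2)%N (leq_trans (leqnSn M) (leq_trans (leqnSn _) (leq_addl _ _))).
have hnj : (n0 <= n + M)%N by apply: leq_trans Hn (leq_addr _ _).
rewrite !addnS Hp; last by apply: leq_trans hnj (leqnSn _).
rewrite Hq // Hr //.
have [h1 [h2 h3]] := inv M; have := km0 _ hnj.
move=> hk; rewrite ger0_norm; nra.
Qed.

End Sign.

Lemma SIGN (p q r km : nat -> R) (n0 : nat) :
  (forall n, (n0 <= n)%N -> 0 <= km n) ->
  (forall n, (n0 <= n)%N -> p n.+1 = q n) ->
  (forall n, (n0 <= n)%N -> r n.+1 = km n * p n + r n) ->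
  (forall n, (n0 <= n)%N -> q n.+1 = r n.+1 + p n) ->
  (forall e, 0 < e -> exists M, forall n, (M <= n)%N -> `|p n| < e) ->
  forall N, exists n, (N <= n)%N /\
    ((0 <= p n /\ 0 <= q n /\ r n <= 0) \/ (p n <= 0 /\ q n <= 0 /\ 0 <= r n)).
Proof.
move=> km0 Hp Hr Hq Hlim N.
have OP := @Opos p q r km n0 km0 Hp Hr Hq Hlim.
have ON : forall n, (n0 <= n)%N -> p n <= 0 -> q n <= 0 -> r n < 0 -> False.
  move=> n Hn h1 h2 h3.
  apply: (@Opos (fun n => - p n) (fun n => - q n) (fun n => - r n) km n0 km0 _ _ _ _ n Hn).
  - by move=> m hm /=; rewrite Hp.
  - by move=> m hm /=; rewrite Hr //; ring.
  - by move=> m hm /=; rewrite Hq //; ring.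
  - by move=> e he; have [M HM] := Hlim e he; exists M => m hm; rewrite normrN; apply: HM.
  - by rewrite oppr_ge0.
  - by rewrite oppr_ge0.
  - by rewrite oppr_gt0.
set N1 := maxn N n0.
case: (Classical_Prop.classic (exists n, (N1 <= n)%N /\ 0 <= p n * q n)) => [[n [Hn Hpq]]|Hno].
  have hN : (N <= n)%N by apply: leq_trans Hn; apply: leq_maxl.
  have h0 : (n0 <= n)%N by apply: leq_trans Hn; apply: leq_maxr.
  exists n; split => //.
  case: (lerP 0 (p n)) => hp.
    case: (lerP 0 (q n)) => hq.
      case: (lerP (r n) 0) => hr; first by left.
      by case: (OP n h0 hp hq hr).
    have hp0 : p n = 0 by nra.
    right; split; first by rewrite hp0.
    split; first by apply: ltW.
    case: (lerP 0 (r n)) => hr //.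
    have hp1 : p n <= 0 by rewrite hp0.
    by case: (ON n h0 hp1 (ltW hq) hr).
  have hq : q n <= 0 by nra.
  right; split; first by apply: ltW.
  split => //.
  case: (lerP 0 (r n)) => hr //.
  by case: (ON n h0 (ltW hp) hq hr).
exfalso.
have Alt : forall n, (N1 <= n)%N -> p n * q n < 0.
  by move=> n hn; rewrite ltNge; apply/negP => h; apply: Hno; exists n.
have hN1 : (n0 <= N1)%N by apply: leq_maxr.
pose b n := `|p n| + `|q n|.
have Hb : forall n, (N1 <= n)%N -> b n <= b n.+2.
  move=> n hn.
  have h0 : (n0 <= n)%N by apply: leq_trans hn.
  have h1 : (n0 <= n.+1)%N by apply: leq_trans h0 (leqnSn _).
  have a0 := Alt n hn.
  have a1 := Alt n.+1 (leq_trans hn (leqnSn _)).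
  have a2 := Alt n.+2 (leq_trans hn (leq_trans (leqnSn _) (leqnSn _))).
  have k1 := km0 _ h1.
  rewrite /b.
  have e1 : p n.+1 = q n by apply: Hp.
  have e2 : q n.+2 = r n.+2 + p n.+1 by apply: Hq.
  have e3 : r n.+2 = km n.+1 * p n.+1 + r n.+1 by apply: Hr.
  have e4 : p n.+2 = q n.+1 by apply: Hp.
  have e5 : q n.+1 = r n.+1 + p n by apply: Hq.
  rewrite e4 e1 in a1 *; rewrite e4 in a2.
  rewrite e2 e3 e5 in a2 *; rewrite e5 in a1 *.
  rewrite -e1 in a0 a1 a2 *.
  case: (lerP 0 (p n)) => hp.
    have hq : p n.+1 < 0 by nra.
    have hr : 0 < r n.+1 + p n by nra.
    have hs : km n.+1 * p n.+1 + r n.+1 + p n.+1 < 0 by nra.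
    rewrite (ger0_norm hp) (ltr0_norm hq) (gtr0_norm hr) (ltr0_norm hs); nra.
  have hq : 0 < p n.+1 by nra.
  have hr : r n.+1 + p n < 0 by nra.
  have hs : 0 < km n.+1 * p n.+1 + r n.+1 + p n.+1 by nra.
  rewrite (ltr0_norm hp) (gtr0_norm hq) (ltr0_norm hr) (gtr0_norm hs); nra.
have Hbj : forall j, b N1 <= b (N1 + j.*2)%N.
  elim=> [|j IH]; first by rewrite addn0.
  apply: le_trans IH _; rewrite doubleS !addnS; apply: Hb.
  by apply: leq_addr.
have bpos : 0 < b N1.
  have := Alt N1 (leqnn _); rewrite /b => h.
  have : p N1 != 0 by apply: contraTneq h => ->; rewrite mul0r ltxx.
  rewrite -normr_gt0 => hh; have := normr_ge0 (q N1); lra.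
have [M HM] := Hlim (b N1 / 2) (divr_gt0 bpos (ltr0n _ 2)).
have := Hbj M; rewrite /b; rewrite /b in HM.
have hM : (M <= N1 + M.*2)%N by rewrite -addnn addnA leq_addl.
have := HM _ hM.
rewrite -(Hp (N1 + M.*2)%N); last by apply: leq_trans hN1 (leq_addr _ _).
have := HM (N1 + M.*2).+1 (leq_trans hM (leqnSn _)).
have := normr_ge0 (p N1); have := normr_ge0 (q N1).
lra.
Qed.

Lemma Qminus_back (x : 'rV[R]_3) kk : (0 < kk)%N -> Qminus (x *m Amat R kk) -> Qminus x.
Proof.
case: kk => // kk _; rewrite rowx_mulA /Qminus row3_0 row3_1 row3_2 /=.
have -> : (kk.+1%:R : R) = kk%:R + 1 by rewrite -addn1 natrD.
move=> [h1 [h2 h3]].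
have hx : 0 <= x ord0 0 by nra.
have hk : 0 <= kk%:R * x ord0 0 by apply: mulr_ge0 => //; exact: ler0n.
split => //; split => //; nra.
Qed.

Lemma cone_inf k (x : 'rV[R]_3) : (forall i, (1 <= i)%N -> (0 < k i)%N) ->
  (forall N, exists n, (N <= n)%N /\ Qminus (x *m Aprod R k n)) -> stable_cone k x.
Proof.
move=> Hk H n _.
have [N [hN hQ]] := H n.
have back : forall d, Qminus (x *m Aprod R k (n + d)) -> Qminus (x *m Aprod R k n).
  elim=> [|d IH]; first by rewrite addn0.
  rewrite addnS Aprod_S mulmxA => hq; apply: IH; apply: Qminus_back hq.
  exact: Hk.
by apply: (back (N - n)%N); rewrite subnKC.
Qed.

End P3.
Arguments err {R}. Arguments row3 {R}. Arguments rowZ {R}.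

Lemma Wnn1 k n : Wl k n n.+1 = [:: 3%N] ++ nseq (k n.+1).-1 1%N.
Proof. by rewrite W_succ // W_le // chi_word1 chi3. Qed.

Theorem theorem3p8 (R : realType) (k : nat -> nat) (xi : R) (rho : nat -> nat) :
  (forall i, (1 <= i)%N -> (0 < k i)%N) ->
  (forall N, exists i, (N <= i)%N /\ (1 < k (2 * i))%N) ->
  (forall N, exists i, (N <= i)%N /\ (1 < k (2 * i).+1)%N) ->
  0 < xi < 1 ->
  is_limit_word k rho ->
  ~ in_Ws_plus_Z3 k (const_mx xi) ->
  ~ continuous_eigenvalue (orbit_closure rho) xi.
Proof.
move=> Hpos H2 H3 /andP [xi0 xi1] Hr HnW [f [Hc [Hnz Hf]]].
apply: HnW.
have Hk : forall N, exists i, (N <= i)%N /\ (1 < k i)%N.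
  by move=> N; have [i [hi hk]] := H2 N; exists (2 * i)%N; split => //; lia.
have Hocc : forall n, exists i u s, Wl k n i = u ++ 1%N :: s.
  by move=> n; have [d hd] := parity_d H2 H3 n; exact: OCC Hpos _ _ hd.
have NEAR : forall d : R, 0 < d -> d <= 1/2 -> exists M, forall n, (M <= n)%N ->
   forall i u s, Wl k n i = u ++ s -> Near (xi * (size (sig k n u))%:R) d.
  move=> d d0 d1.
  have [N HN] := @EIG R rho xi f Hc Hnz Hf xi0 d d0 d1.
  have [M HM] := GOOD Hk Hr N.
  by exists M => n hn i u s E; apply: HN => j hj; exact: HM n hn i u s E j hj.
pose H n a : R := (hs k n a)%:R.
pose e n a := err (xi * H n a).
have NEAR1 : forall d : R, 0 < d -> d <= 1/4 -> exists M, forall n, (M <= n)%N -> `|e n 1%N| < d + d.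
  move=> d d0 d1.
  have h14 : d <= 1/2 by lra.
  have [M HM] := NEAR d d0 h14.
  exists M => n hn.
  have [i [u [s E]]] := Hocc n.
  have [m1 h1] := HM n hn i u (1%N :: s) E.
  have [m2 h2] := HM n hn i (u ++ [:: 1%N]) s ltac:(by rewrite -catA).
  rewrite size_sig_cat natrD mulrDr in h2.
  have := near_diff R _ _ _ _ _ h1 h2.
  move=> h; apply: (err_near R _ (d + d) (m2 - m1) _ h); lra.
set d0 : R := 1/8.
have [M0 HM0] := NEAR d0 ltac:(rewrite /d0; lra) ltac:(rewrite /d0; lra).
have [M1 HM1] := NEAR1 d0 ltac:(rewrite /d0; lra) ltac:(rewrite /d0; lra).
set n0 := maxn M0 M1.
have F3 : forall n, (n0 <= n)%N -> forall j, (j <= (k n.+1).-1)%N ->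
   `|err (xi * (H n 3%N + j%:R * H n 1%N))| < d0 /\
   err (xi * (H n 3%N + j%:R * H n 1%N)) = e n 3%N + j%:R * e n 1%N.
  move=> n hn.
  have hn0 : (M0 <= n)%N by apply: leq_trans hn; apply: leq_maxl.
  have hn1 : (M1 <= n)%N by apply: leq_trans hn; apply: leq_maxr.
  have pos : forall j, (j <= (k n.+1).-1)%N -> `|err (xi * (H n 3%N + j%:R * H n 1%N))| < d0.
    move=> j hj.
    have E : Wl k n n.+1 = ([:: 3%N] ++ nseq j 1%N) ++ nseq ((k n.+1).-1 - j) 1%N.
      by rewrite Wnn1 -catA -nseqD subnKC.
    have [m hm] := HM0 n hn0 n.+1 _ _ E.
    rewrite size_sig_cat size_sig_nseq natrD natrM in hm.
    by apply: (err_near R _ d0 m) hm; rewrite /d0; lra.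
  elim=> [|j IH] hj.
    by rewrite !mul0r !addr0; split => //; have := pos 0%N hj; rewrite mul0r addr0.
  have [IH1 IH2] := IH (ltnW hj).
  split; first exact: pos.
  have -> : xi * (H n 3%N + j.+1%:R * H n 1%N) = xi * (H n 3%N + j%:R * H n 1%N) + xi * H n 1%N.
    by rewrite -[j.+1]addn1 natrD; ring.
  rewrite err_add IH2; first by rewrite -[j.+1]addn1 natrD; rewrite /e; ring.
  have := HM1 n hn1; rewrite /e => h.
  apply: le_lt_trans (ler_normD _ _) _.
  rewrite /d0 IH2 /e in IH1 h; lra.
pose km n : R := ((k n.+1).-1)%:R.
have kS : forall n, ((k n.+1)%:R : R) = km n + 1.
  by move=> n; rewrite /km natr1 prednK //; exact: Hpos.
have R1 : forall n, e n.+1 1%N = e n 2%N by move=> n; rewrite /e /H hs_1.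
have H3S : forall n, H n.+1 3%N = H n 3%N + km n * H n 1%N.
  by move=> n; rewrite /H hs_3 natrD natrM.
have R3 : forall n, (n0 <= n)%N -> e n.+1 3%N = km n * e n 1%N + e n 3%N.
  move=> n hn; have [_ h] := F3 n hn _ (leqnn _).
  by rewrite /e H3S h addrC.
have R2 : forall n, (n0 <= n)%N -> e n.+1 2%N = e n.+1 3%N + e n 1%N.
  move=> n hn; have [h1 h2] := F3 n hn _ (leqnn _).
  rewrite /e.
  have -> : H n.+1 2%N = H n.+1 3%N + H n 1%N.
    by rewrite H3S /H hs_2 natrD natrM kS /km; ring.
  rewrite mulrDr err_add //.
  have hn1 : (M1 <= n)%N by apply: leq_trans hn; apply: leq_maxr.
  have := HM1 n hn1; rewrite /e -H3S in h1 *; rewrite /d0 in h1 * => h.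
  apply: le_lt_trans (ler_normD _ _) _; lra.
pose z a := Num.floor (xi * H n0 a + 1/2).
pose Zv := pbZ k n0 (z 1%N, z 2%N, z 3%N).
pose v := const_mx xi - rowZ Zv.
have Vc : forall n, const_mx xi *m Aprod R k n = row3 (xi * H n 1%N) (xi * H n 2%N) (xi * H n 3%N).
  elim=> [|n IH]; first by rewrite Aprod_0 mulmx1 const3 /H !hs0 mulr1.
  rewrite Aprod_S mulmxA IH row3_mulA /H hs_1 hs_2 hs_3 !natrD !natrM; congr row3; ring.
have Ve : forall d, v *m Aprod R k (n0 + d) =
    row3 (e (n0 + d)%N 1%N) (e (n0 + d)%N 2%N) (e (n0 + d)%N 3%N).
  elim=> [|d IH].
    by rewrite addn0 mulmxBl Vc pbZ_ok // row3B.
  have hd : (n0 <= n0 + d)%N by apply: leq_addr.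
  rewrite addnS Aprod_S mulmxA IH row3_mulA R1 (R2 _ hd) (R3 _ hd) kS; congr row3; ring.
pose y n := v *m Aprod R k n.
pose p n := y n ord0 0; pose q n := y n ord0 1; pose r n := y n ord0 2.
have yS : forall n, y n.+1 = row3 (q n) ((k n.+1)%:R * p n + r n) (km n * p n + r n).
  by move=> n; rewrite /y Aprod_S mulmxA rowx_mulA.
have Hp : forall n, (n0 <= n)%N -> p n.+1 = q n by move=> n _; rewrite /p yS row3_0.
have Hrr : forall n, (n0 <= n)%N -> r n.+1 = km n * p n + r n by move=> n _; rewrite /r yS row3_2.
have Hq : forall n, (n0 <= n)%N -> q n.+1 = r n.+1 + p n.
  by move=> n _; rewrite /r /q yS row3_1 row3_2 kS; ring.
have km0 : forall n, (n0 <= n)%N -> 0 <= km n by move=> n _; exact: ler0n.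
have Hlim : forall eta : R, 0 < eta -> exists M, forall n, (M <= n)%N -> `|p n| < eta.
  move=> eta eta0.
  have [dd [dd0 [dd1 dd2]]] : exists dd : R, 0 < dd /\ dd <= 1/4 /\ dd + dd <= eta.
    case: (lerP eta (1/2)) => he.
      by exists (eta / 2); split; [|split]; lra.
    by exists (1/4); split; [|split]; lra.
  have [M HM] := NEAR1 dd dd0 dd1.
  exists (maxn M n0) => n hn.
  have hn0 : (n0 <= n)%N by apply: leq_trans hn; apply: leq_maxr.
  have hM : (M <= n)%N by apply: leq_trans hn; apply: leq_maxl.
  have -> : p n = e n 1%N.
    by rewrite /p /y -(subnKC hn0) Ve row3_0.
  by apply: lt_le_trans (HM n hM) dd2.
have SG := SIGN R p q r km n0 km0 Hp Hrr Hq Hlim.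
have Qy : forall n, Qminus (y n) <-> (0 <= p n /\ 0 <= q n /\ r n <= 0) by [].
have Qny : forall n, Qminus ((- v) *m Aprod R k n) <-> (p n <= 0 /\ q n <= 0 /\ 0 <= r n).
  move=> n; rewrite mulNmx /Qminus -/(y n) ![(- y n) _ _]mxE -/(p n) -/(q n) -/(r n).
  by rewrite !oppr_ge0 oppr_le0.
have Hcone : stable_cone k v \/ stable_cone k (- v).
  case: (Classical_Prop.classic (forall N, exists n, (N <= n)%N /\ Qminus (y n))) => hc.
    by left; apply: cone_inf Hpos hc.
  right; apply: cone_inf Hpos _ => N.
  have [N0 hN0] : exists N0, forall n, (N0 <= n)%N -> ~ Qminus (y n).
    apply: Classical_Prop.NNPP => hn; apply: hc => N1.
    apply: Classical_Prop.NNPP => hn1; apply: hn; exists N1 => n h1 h2.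
    by apply: hn1; exists n.
  have [n [hn [h|h]]] := SG (maxn N N0).
    by exfalso; apply: (hN0 n); [apply: leq_trans hn; apply: leq_maxr | ].
  by exists n; split; [apply: leq_trans hn; apply: leq_maxl | apply/Qny].
pose Zf (j : 'I_3) := if (j : nat) == 0%N then Zv.1.1 else if (j : nat) == 1%N then Zv.1.2 else Zv.2.
have vW : Ws k v.
  case: Hcone => hc.
    exists 1%N, (fun _ => 1), (fun _ => v); split => //.
    by rewrite big_ord1 scale1r.
  exists 1%N, (fun _ => -1), (fun _ => - v); split => //.
  by rewrite big_ord1 scaleN1r opprK.
exists v, Zf; split => //.
have -> : \row_(j < 3) ((Zf j)%:~R : R) = rowZ Zv.
  by apply/rowP => j; rewrite !mxE /Zf; case: ifP => _ //; case: ifP.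
by rewrite /v subrK.
Qed.
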